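(* Let $\tau:\mathbb N\to\mathbb N$ be defined by $\tau(n)=\lfloor\varphi n+1\rfloor$ if $n\in R_{2,0}$, $\tau(n)=\lfloor\varphi n-1\rfloor$ if $n\in R_{1,0}$, and $\tau(n)=\lfloor(\varphi-1)n+1\rfloor$ if $n\in R_{1,1}$. Then for every integer $n\geq 1$, $\tau^n(3)=F(n+3)+2$.
   Context: $\mathbb N=\{1,2,\dots\}$, $\varphi=\frac{1+\sqrt5}{2}$, $F$ the Fibonacci sequence with $F(0)=0$, $F(1)=F(2)=1$, $F(n)=F(n-1)+F(n-2)$. For $i\in\mathbb Z^{\ge0},j\in\mathbb Z$, $R_{i,j}$ is the range of $n\mapsto F(i+1)\lfloor n\varphi\rfloor+F(i)n-j$, $n\in\mathbb N$; the sets $R_{2,0},R_{1,0},R_{1,1}$ partition $\mathbb N$. $\tau^n$ denotes the $n$-fold composition. *)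

(* Defs.v *)
From Stdlib Require Import Reals ZArith Lia Lra ClassicalEpsilon.
Open Scope R_scope.

Definition phi : R := (1 + sqrt 5) / 2.

(* Floor function R -> Z: up x is the unique integer with x < up x <= x + 1 *)
Definition floorZ (x : R) : Z := (up x - 1)%Z.

Fixpoint F (n : nat) : nat :=
  match n with
  | O => O
  | S O => 1%nat
  | S ((S k) as k') => (F k' + F k)%nat
  end.

Definition inR (i : nat) (j : Z) (m : nat) : Prop :=
  exists k : nat, (1 <= k)%nat /\
    Z.of_nat m = (Z.of_nat (F (i + 1)) * floorZ (INR k * phi)
                  + Z.of_nat (F i) * Z.of_nat k - j)%Z.

(* The map tau (the three sets R_{2,0}, R_{1,0}, R_{1,1} partition N;
   the value outside them, e.g. at 0, is irrelevant). *)
Definition tau (n : nat) : nat :=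
  if excluded_middle_informative (inR 2 0 n) then
    Z.to_nat (floorZ (phi * INR n + 1))
  else if excluded_middle_informative (inR 1 0 n) then
    Z.to_nat (floorZ (phi * INR n - 1))
  else if excluded_middle_informative (inR 1 1 n) then
    Z.to_nat (floorZ ((phi - 1) * INR n + 1))
  else O.

(* Main.v *)
Require Import Defs.
From Stdlib Require Import Reals ZArith Lia Lra Psatz ClassicalEpsilon.
Open Scope R_scope.

Definition psi : R := (1 - sqrt 5) / 2.

Lemma s_facts : sqrt 5 * sqrt 5 = 5 /\ 2.236 < sqrt 5 < 2.237.
Proof.
  assert (H := sqrt_sqrt 5 ltac:(lra)). assert (H0 := sqrt_pos 5).
  split; [exact H|split; nra].
Qed.

Lemma phi_sq : phi * phi = phi + 1.
Proof. destruct s_facts as [H _]. unfold phi. nra. Qed.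

Lemma phi_b : 1.618 < phi < 1.6186.
Proof. destruct s_facts as [_ H]. unfold phi. lra. Qed.

Lemma psi_b : -0.6186 < psi < -0.618.
Proof. destruct s_facts as [_ H]. unfold psi. lra. Qed.

Lemma psi_phi : psi = 1 - phi.
Proof. unfold psi, phi. lra. Qed.

Lemma psi_le1 : forall k, Rabs (psi ^ k) <= 1.
Proof.
  induction k as [|k IH]; simpl. rewrite Rabs_R1; lra.
  rewrite Rabs_mult. assert (Rabs psi <= 1) by (destruct psi_b; rewrite Rabs_left; lra).
  assert (0 <= Rabs psi) by apply Rabs_pos.
  assert (0 <= Rabs (psi ^ k)) by apply Rabs_pos. nra.
Qed.

Lemma psi_mono : forall k j, Rabs (psi ^ (k + j)) <= Rabs (psi ^ k).
Proof.
  intros. rewrite pow_add, Rabs_mult.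
  assert (0 <= Rabs (psi ^ k)) by apply Rabs_pos.
  assert (0 <= Rabs (psi ^ j)) by apply Rabs_pos.
  pose proof (psi_le1 j). nra.
Qed.

Lemma psi1 : Rabs (psi ^ 1) <= 0.6186.
Proof. destruct psi_b. simpl. rewrite Rmult_1_r, Rabs_left; lra. Qed.

Lemma psi2 : Rabs (psi ^ 2) <= 0.383.
Proof. destruct psi_b. rewrite Rabs_right; simpl; nra. Qed.

Lemma psi4 : Rabs (psi ^ 4) <= 0.15.
Proof.
  destruct psi_b. assert (psi^4 = (psi*psi)*(psi*psi)) by (simpl; ring).
  rewrite H1. assert (psi*psi <= 0.3827) by nra.
  rewrite Rabs_right; nra.
Qed.

Lemma abs_betw : forall x y z, Rabs x <= y -> y <= z -> -z <= x <= z.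
Proof. intros x y z H H'. unfold Rabs in H. destruct (Rcase_abs x); lra. Qed.

Lemma psi_lower : forall m, -0.6186 <= psi ^ m <= 1.
Proof.
  intros [|m]. simpl; lra.
  pose proof (psi_mono 1 m) as Hm. pose proof psi1.
  apply (abs_betw _ _ _ Hm) in H. simpl in H |- *. lra.
Qed.

Lemma F_SS : forall m, F (S (S m)) = (F (S m) + F m)%nat.
Proof. reflexivity. Qed.

Lemma e_lemma : forall m, phi * INR (F m) - INR (F (S m)) = - psi ^ m.
Proof.
  induction m as [|m IH].
  - simpl. lra.
  - rewrite F_SS, plus_INR. simpl pow.
    pose proof phi_sq. rewrite psi_phi in *.
    assert (E : (1 - phi) ^ m = INR (F (S m)) - phi * INR (F m)) by lra.
    rewrite E. set (a := INR (F (S m))). set (b := INR (F m)).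
    transitivity (phi * a - a - b); [ring|].
    transitivity (-((1 - phi) * (a - phi * b)) + b * (phi * phi - (phi + 1))); [|rewrite H; ring].
    ring.
Qed.

Lemma floor_eq : forall x z, IZR z <= x < IZR z + 1 -> floorZ x = z.
Proof.
  intros x z [H1 H2]. unfold floorZ.
  rewrite <- (up_tech x z H1). lia. rewrite plus_IZR. lra.
Qed.

Lemma floor_spec : forall x, IZR (floorZ x) <= x < IZR (floorZ x) + 1.
Proof.
  intros x. unfold floorZ. destruct (archimed x). rewrite minus_IZR. lra.
Qed.

Lemma in10 : forall m, inR 1 0 (F (S (S (S (S m)))) + 2).
Proof.
  intros m. exists (F (S (S m)) + 1)%nat. split. lia.
  simpl (F (1+1)). simpl (F 1).
  rewrite (floor_eq _ (Z.of_nat (F (S (S (S m)))) + 1)).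
  - rewrite (F_SS (S (S m))). lia.
  - pose proof (e_lemma (S (S m))). pose proof (psi_lower m) as Hl.
    pose proof psi_b. pose proof phi_b.
    rewrite plus_IZR, <- INR_IZR_INZ, plus_INR. simpl (INR 1).
    change (psi ^ S (S m)) with (psi * (psi * psi ^ m)) in H.
    assert (-0.2371 <= psi * (psi * psi ^ m) <= 0.383) by (rewrite <- Rmult_assoc; assert (0.38 <= psi*psi <= 0.3827) by nra; nra).
    set (t := psi * (psi * psi ^ m)) in *. clear Hl.
    rewrite Rmult_plus_distr_r. rewrite (Rmult_comm (INR _) phi). split; lra.
Qed.

Lemma F4 : forall m, F (S (S (S (S m)))) = (2 * F (S (S m)) + F (S m))%nat.
Proof. intros m. rewrite (F_SS (S (S m))), (F_SS (S m)). lia. Qed.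

Lemma notin20 : forall m, ~ inR 2 0 (F (S (S (S (S m)))) + 2).
Proof.
  intros m [k [Hk HE]]. simpl (F (2+1)) in HE. simpl (F 2) in HE.
  pose proof (floor_spec (INR k * phi)) as Hf.
  set (a := floorZ (INR k * phi)) in *.
  set (q := F (S m)) in *.
  assert (Hn : F (S (S (S (S m)))) = (2 * F (S (S m)) + q)%nat).
  { unfold q. apply F4. }
  assert (HER : INR (F (S (S (S (S m))))) + 2 = 2 * IZR a + INR k).
  { rewrite INR_IZR_INZ. rewrite INR_IZR_INZ. rewrite <- plus_IZR, <- mult_IZR, <- plus_IZR.
    apply IZR_eq. lia. }
  rewrite Hn, plus_INR, mult_INR in HER. simpl (INR 2) in HER.
  pose proof (e_lemma (S m)). fold q in H.
  pose proof (psi_mono 1 m) as Hm. pose proof psi1 as H1. pose proof phi_b.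
  apply (abs_betw _ _ _ Hm) in H1.
  assert (Hp : 0.76 < (2*phi+1) * (INR k - INR q) < 5.24).
  { change (psi ^ S m) with (psi ^ (1 + m)) in H. split; nra. }
  assert (HR : 0 < INR k - INR q < 2) by (split; nra).
  rewrite !INR_IZR_INZ, <- minus_IZR in HR. destruct HR as [HR1 HR2].
  apply lt_IZR in HR1. apply lt_IZR in HR2.
  rewrite Hn in HE. lia.
Qed.

Lemma tau_step : forall m, tau (F (S (S (S (S m)))) + 2) = (F (S (S (S (S (S m))))) + 2)%nat.
Proof.
  intros m. unfold tau.
  destruct (excluded_middle_informative _) as [H|_]. { exfalso; exact (notin20 m H). }
  destruct (excluded_middle_informative _) as [_|H]. 2:{ exfalso; exact (H (in10 m)). }
  rewrite (floor_eq _ (Z.of_nat (F (S (S (S (S (S m)))))) + 2)). lia.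
  pose proof (e_lemma (S (S (S (S m))))). pose proof (psi_mono 4 m) as Hm.
  pose proof psi4 as H4. destruct s_facts as [_ Hs].
  rewrite plus_IZR, <- INR_IZR_INZ, plus_INR. simpl (INR 2).
  change (psi ^ S (S (S (S m)))) with (psi ^ (4 + m)) in H.
  apply (abs_betw _ _ _ Hm) in H4. unfold phi in *. split; nra.
Qed.

Lemma tau3 : tau 3 = 5%nat.
Proof.
  assert (Hf : floorZ (INR 1 * phi) = 1%Z).
  { apply floor_eq. pose proof phi_b. simpl. lra. }
  unfold tau.
  destruct (excluded_middle_informative _) as [_|H].
  - rewrite (floor_eq _ 5). reflexivity. pose proof phi_b. simpl. lra.
  - exfalso. apply H. exists 1%nat. split. lia. rewrite Hf. reflexivity.
Qed.

Theorem theorem4p7 : forall n : nat, (1 <= n)%nat ->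
  Nat.iter n tau 3%nat = (F (n + 3) + 2)%nat.
Proof.
  intros n Hn. destruct n as [|n]. lia. clear Hn.
  induction n as [|n IH].
  - simpl. exact tau3.
  - change (Nat.iter (S (S n)) tau 3%nat) with (tau (Nat.iter (S n) tau 3%nat)).
    rewrite IH. replace (S n + 3)%nat with (S (S (S (S n)))) by lia.
    rewrite tau_step. f_equal. f_equal. lia.
Qed.
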